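(* Let $\mathfrak g$ be a $7$-dimensional real Lie algebra and $\pi\colon\mathfrak g\to\mathfrak h$ a Lie algebra epimorphism onto a $6$-dimensional Lie algebra $\mathfrak h$ with $\ker\pi$ contained in the center of $\mathfrak g$. Suppose $\mathfrak h$ admits no symplectic form. Then for a generator $X$ of $\ker\pi$ one has $(X\lrcorner\,\phi)^3=0$ for every closed $\phi\in\Lambda^3\mathfrak g^*$; in particular $\mathfrak g$ admits no calibrated $\mathrm{G}_2$-structure.
   Context: $d$ denotes the Chevalley–Eilenberg differential. A symplectic form on a $6$-dimensional Lie algebra is a closed $2$-form $\omega$ with $\omega^3\neq0$. A $3$-form $\varphi$ on a $7$-dimensional Lie algebra defines a $\mathrm{G}_2$-structure if in some basis $f^1,\dots,f^7$ of $\mathfrak g^*$ it equals $f^{127}+f^{347}+f^{567}+f^{135}-f^{236}-f^{146}-f^{245}$; it is calibrated if $d\varphi=0$. *)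

(* Defs.v *)
From HB Require Import structures.
From mathcomp Require Import all_boot all_order all_algebra all_fingroup.
Set Implicit Arguments. Unset Strict Implicit. Unset Printing Implicit Defensive.
Import Order.TTheory GRing.Theory Num.Theory.
Local Open Scope ring_scope.

Section LieForms.
Variable R : realFieldType.

Definition lie_bracket n (br : 'rV[R]_n -> 'rV[R]_n -> 'rV[R]_n) : Prop :=
  [/\ forall a x y z, br (a *: x + y) z = a *: br x z + br y z,
      forall a x y z, br x (a *: y + z) = a *: br x y + br x z,
      forall x, br x x = 0 &
      forall x y z, br x (br y z) + br y (br z x) + br z (br x y) = 0].

Definition kform n k := ('I_k -> 'rV[R]_n) -> R.

Definition kupd n k (v : 'I_k -> 'rV[R]_n) (i : 'I_k) (w : 'rV[R]_n) :=
  fun t => if t == i then w else v t.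

Definition kmultilinear n k (f : kform n k) : Prop :=
  forall v i a x y, f (kupd v i (a *: x + y)) = a * f (kupd v i x) + f (kupd v i y).

Definition kalternating n k (f : kform n k) : Prop :=
  forall (v : 'I_k -> 'rV[R]_n) (i j : 'I_k), i != j -> v i = v j -> f v = 0.

Definition is_kform n k (f : kform n k) : Prop := kmultilinear f /\ kalternating f.

Definition kwedge n p q (a : kform n p) (b : kform n q) : kform n (p + q) :=
  fun v => (p`!%:R * q`!%:R)^-1 *
    \sum_(s : 'S_(p + q)) (-1) ^+ (odd_perm s) *
       a (fun i => v (s (lshift q i))) * b (fun j => v (s (rshift p j))).

(* Chevalley--Eilenberg differential:
   dphi(x_0..x_k) = sum_{i<j} (-1)^(i+j) phi([x_i,x_j], x_0,..^i..^j..,x_k) *)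
Definition ce_d n k (br : 'rV[R]_n -> 'rV[R]_n -> 'rV[R]_n) (phi : kform n k)
  : kform n k.+1 :=
  fun x => \sum_(i < k.+1) \sum_(j < k.+1 | (i < j)%N)
    (-1) ^+ (i + j) *
      phi (fun t => if val t == 0%N then br (x i) (x j)
                    else nth 0 [seq x l | l <- enum 'I_k.+1 & (l != i) && (l != j)]
                           (val t).-1).

Definition ce_closed n k br (phi : kform n k) : Prop := forall x, ce_d br phi x = 0.

Definition kcontract n k (X : 'rV[R]_n) (phi : kform n k.+1) : kform n k :=
  fun v => phi (fun t => if unlift ord0 t is Some t' then v t' else X).

Definition kcube n (w : kform n 2) : kform n (2 + (2 + 2)) := kwedge w (kwedge w w).

Definition lie_symplectic n br (w : kform n 2) : Prop :=
  [/\ is_kform w, ce_closed br w & exists v, kcube w v <> 0].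

(* dual basis f^1..f^7 given by the columns of an invertible matrix B *)
Definition dualf (B : 'M[R]_7) (i : nat) : kform 7 1 :=
  fun v => (v ord0 *m B) 0 (inord i).

(* f^{ijk} with paper's 1-based indices *)
Definition f3 (B : 'M[R]_7) (i j k : nat) : kform 7 3 :=
  kwedge (dualf B i.-1) (kwedge (dualf B j.-1) (dualf B k.-1)).

Definition G2_std (B : 'M[R]_7) : kform 7 3 := fun v =>
  f3 B 1 2 7 v + f3 B 3 4 7 v + f3 B 5 6 7 v + f3 B 1 3 5 v
  - f3 B 2 3 6 v - f3 B 1 4 6 v - f3 B 2 4 5 v.

Definition lie_G2_structure (phi : kform 7 3) : Prop :=
  exists B : 'M[R]_7, B \in unitmx /\ forall v, phi v = G2_std B v.

Definition lie_calibrated_G2 br (phi : kform 7 3) : Prop :=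
  lie_G2_structure phi /\ ce_closed br phi.

End LieForms.

(* Main.v *)
Require Import Defs.
From HB Require Import structures.
From mathcomp Require Import all_boot all_order all_algebra all_fingroup.
From Stdlib Require Import Ring FunctionalExtensionality PeanoNat.
Set Implicit Arguments. Unset Strict Implicit. Unset Printing Implicit Defensive.
Import GRing.Theory Num.Theory.
Local Open Scope ring_scope.

Section S.
Variable R : realFieldType.
Definition addR (x y : R) : R := x + y.
Definition mulR (x y : R) : R := x * y.
Definition oppR (x : R) : R := - x.
Definition subR (x y : R) : R := addR x (oppR y).
Definition zeroR : R := 0.
Definition oneR : R := 1.
Lemma RTh0 : @ring_theory R zeroR oneR addR mulR subR oppR eq.
Proof.
rewrite /addR /mulR /subR /oppR /zeroR /oneR.
split=> //=; [exact: add0r|exact: addrC|exact: addrA|exact: mul1r|exact: mulrC|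
  exact: mulrA|exact: mulrDl|exact: subrr].
Qed.
Add Ring Rring0 : RTh0.
Lemma addE (x y : R) : x + y = addR x y. Proof. by []. Qed.
Lemma mulE (x y : R) : x * y = mulR x y. Proof. by []. Qed.
Lemma oppE (x : R) : - x = oppR x. Proof. by []. Qed.
Lemma zeroE : 0 = zeroR :> R. Proof. by []. Qed.
Lemma oneE : 1 = oneR :> R. Proof. by []. Qed.
Ltac rring := rewrite ?addE ?mulE ?oppE ?zeroE ?oneE; match goal with |- ?a = ?b => change (@eq R a b) end;  ring.

Definition sgn (j : nat) : R := if Nat.odd j then oppR oneR else oneR.
Fixpoint sumL (l : seq nat) (F : nat -> R) : R :=
  match l with [::] => zeroR | j :: l' => addR (F j) (sumL l' F) end.
Definition bmp (j x : nat) : nat := if Nat.leb j x then S x else x.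
Definition Step (N j : nat) (f : nat -> nat) (k : nat) : nat :=
  match k with 0 => j | S k' => if Nat.ltb k' N then bmp j (f k') else 0%N end.
Fixpoint PS (N : nat) (G : (nat -> nat) -> R) {struct N} : R :=
  match N with
  | 0 => G (fun _ => 0%N)
  | S N' => sumL (iota 0%N N) (fun j => mulR (sgn j) (PS N' (fun f => G (Step N' j f))))
  end.
Definition sv N (s : 'S_N) (k : nat) : nat :=
  if @insub nat (fun k => k < N)%N 'I_N k is Some i then val (s i) else 0%N.

Lemma sumLE n (F : nat -> R) : sumL (iota 0%N n) F = \sum_(j < n) F j.
Proof.
rewrite -(big_mkord xpredT) /index_iota subn0.
elim: (iota 0%N n) => [|a l IH] /=; by rewrite ?big_nil ?big_cons ?IH.
Qed.

Lemma sgnE (j : nat) : sgn j = (-1) ^+ j.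
Proof.
rewrite /sgn -signr_odd; have -> : Nat.odd j = odd j.
  elim: j => [|j IH] //=; rewrite Nat.odd_succ -Nat.negb_odd IH //.
by case: (odd j); rewrite ?expr1 ?expr0.
Qed.

Lemma sum_perm_lift n (F : 'S_n.+1 -> R) :
  \sum_(s : 'S_n.+1) F s = \sum_(j : 'I_n.+1) \sum_(t : 'S_n) F (lift_perm ord0 j t).
Proof.
rewrite (partition_big (fun s : 'S_n.+1 => s ord0) xpredT) //=.
apply: eq_bigr => j _.
rewrite (reindex (lift_perm ord0 j)); last first.
  pose ulsf i (s : 'S_n.+1) k := odflt k (unlift (s i) (s (lift i k))).
  have ulsfK i (s : 'S_n.+1) k: lift (s i) (ulsf i s k) = s (lift i k).
    rewrite /ulsf; have:= neq_lift i k.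
    by rewrite -(can_eq (permK s)) => /unlift_some[] ? ? ->.
  have inj_ulsf: injective (ulsf ord0 _).
    move=> s; apply: can_inj (ulsf (s ord0) s^-1%g) _ => k'.
    by rewrite {1}/ulsf ulsfK !permK liftK.
  exists (fun s => perm (inj_ulsf s)) => [s _ | s].
    by apply/permP=> k'; rewrite permE /ulsf lift_perm_lift lift_perm_id liftK.
  move/(s _ =P _) => si0; apply/permP=> k.
  case: (unliftP ord0 k) => [k'|] ->; rewrite ?lift_perm_id //.
  by rewrite lift_perm_lift -si0 permE ulsfK.
by apply: eq_bigl => t; rewrite lift_perm_id eqxx.
Qed.

Lemma sv_lift N (j : 'I_N.+1) (t : 'S_N) :
  sv (lift_perm ord0 j t) = Step N j (sv t).
Proof.
apply: functional_extensionality => k; rewrite /sv /Step.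
case: k => [|k].
  rewrite insubT /= (_ : Sub _ _ = ord0) ?lift_perm_id //; exact: val_inj.
case: insubP => [i Hi Ei|Hk].
  have Hk : (k < N)%N by [].
  have -> : Nat.ltb k N = true by apply/Nat.ltb_lt/ltP.
  rewrite insubT /=.
  have -> : i = lift ord0 (Sub k Hk) by apply: val_inj; rewrite Ei.
  rewrite lift_perm_lift /= /bmp /bump.
  case: (leqP j (t (Sub k Hk))) => Hj.
    by have -> : Nat.leb j (t (Sub k Hk)) = true by apply/Nat.leb_le/leP.
  have -> : Nat.leb j (t (Sub k Hk)) = false by apply/Nat.leb_gt/ltP.
  by rewrite add0n.
have -> : Nat.ltb k N = false by apply/Nat.ltb_ge/leP; rewrite leqNgt.
by [].
Qed.

Lemma PS_ok N (G : (nat -> nat) -> R) :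
  \sum_(s : 'S_N) (-1) ^+ s * G (sv s) = PS N G.
Proof.
elim: N G => [|N IH] G.
  rewrite /= (big_pred1 (1%g : 'S_0)) /=; last by move=> s; apply/esym/eqP/permP => -[].
  rewrite odd_perm1 expr0 mul1r; congr G.
  by apply: functional_extensionality => k; rewrite /sv; case: insubP => // -[].
rewrite (_ : PS N.+1 G = sumL (iota 0%N N.+1) (fun j => sgn j * PS N (fun f => G (Step N j f)))) //.
rewrite sum_perm_lift sumLE; apply: eq_bigr => j _.
rewrite -IH sgnE big_distrr /=; apply: eq_bigr => t _.
rewrite odd_lift_perm /= sv_lift signr_addb mulrA signr_odd.
by [].
Qed.

Lemma sv_val N (s : 'S_N) (k : 'I_N) : sv s (val k) = val (s k).
Proof. rewrite /sv insubT ?ltn_ord //= => H; congr (val (s _)); exact: val_inj. Qed.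

Lemma kwedgeE n p q (a : kform R n p) (b : kform R n q) (h : nat -> 'rV[R]_n) :
  kwedge a b (fun i => h (val i)) = (p`!%:R * q`!%:R)^-1 *
   PS (p + q) (fun f => a (fun i => h (f (val i))) * b (fun j => h (f (p + val j))%N)).
Proof.
rewrite /kwedge -PS_ok; congr (_ * _); apply: eq_bigr => s _.
rewrite -mulrA; congr (_ * (_ * _)); congr (_ _); apply: functional_extensionality => i;
  [by rewrite -(sv_val s (lshift q i))|by rewrite -(sv_val s (rshift p i))].
Qed.

Lemma cmul_inv (k : nat) (A B : R) : (0 < k)%N -> A = k%:R * B -> (k%:R)^-1 * A = B.
Proof. by move=> Hk ->; rewrite mulrA mulVf ?mul1r // pnatr_eq0 -lt0n. Qed.

Definition nthv n k (L : seq 'rV[R]_n) : 'I_k -> 'rV[R]_n := fun i => nth 0 L (val i).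

Lemma kwedgeL n p q (a : kform R n p) (b : kform R n q) (L : seq 'rV[R]_n) :
  kwedge a b (nthv L) = (p`!%:R * q`!%:R)^-1 *
   PS (p + q) (fun f => a (nthv (mkseq (fun i => nth 0 L (f i)) p)) *
                        b (nthv (mkseq (fun j => nth 0 L (f (p + j)%N)) q))).
Proof.
rewrite /nthv kwedgeE; congr (_ * PS _ _); apply: functional_extensionality => f.
congr (a _ * b _); apply: functional_extensionality => i; by rewrite nth_mkseq ?ltn_ord.
Qed.

Opaque addR mulR oppR subR zeroR oneR.
Ltac psexp := rewrite ?addnE; cbn [PS sumL iota Step bmp Nat.leb Nat.ltb Nat.odd Nat.even mkseq map nth addn addn_rec Nat.add]; 
  rewrite /sgn; cbn [Nat.odd Nat.even negb].

Definition W2 n (w : kform R n 2) (x y : 'rV[R]_n) : R := w (nthv [:: x; y]).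
Lemma W2E n (w : kform R n 2) (x y : 'rV[R]_n) : w (nthv [:: x; y]) = W2 w x y.
Proof. by []. Qed.

Lemma kw22 n (w : kform R n 2) (x0 x1 x2 x3 : 'rV[R]_n)
  (skew : forall x y, W2 w x y = - W2 w y x) :
  kwedge w w (nthv [:: x0; x1; x2; x3]) = (1 + 1) *
    (W2 w x0 x1 * W2 w x2 x3 - W2 w x0 x2 * W2 w x1 x3 + W2 w x0 x3 * W2 w x1 x2).
Proof.
rewrite kwedgeL -natrM (_ : (2`! * 2`!)%N = 4%N) //; apply: cmul_inv => //.
psexp; rewrite !W2E (skew x1 x0) (skew x2 x0) (skew x3 x0) (skew x2 x1) (skew x3 x1) (skew x3 x2).
rewrite !mulrS mulr0n; rring.
Qed.

Definition twoR : R := addR oneR oneR.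
Definition threeR : R := addR oneR twoR.

Definition Pf6M (M : nat -> nat -> R) : R :=
  M 0%N 1%N * (M 2%N 3%N * M 4%N 5%N - M 2%N 4%N * M 3%N 5%N + M 2%N 5%N * M 3%N 4%N)
- M 0%N 2%N * (M 1%N 3%N * M 4%N 5%N - M 1%N 4%N * M 3%N 5%N + M 1%N 5%N * M 3%N 4%N)
+ M 0%N 3%N * (M 1%N 2%N * M 4%N 5%N - M 1%N 4%N * M 2%N 5%N + M 1%N 5%N * M 2%N 4%N)
- M 0%N 4%N * (M 1%N 2%N * M 3%N 5%N - M 1%N 3%N * M 2%N 5%N + M 1%N 5%N * M 2%N 3%N)
+ M 0%N 5%N * (M 1%N 2%N * M 3%N 4%N - M 1%N 3%N * M 2%N 4%N + M 1%N 4%N * M 2%N 3%N).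

Definition Gcube (M : nat -> nat -> R) (f : nat -> nat) : R :=
  mulR (M (f 0%N) (f 1%N)) (mulR twoR
    (addR (addR (mulR (M (f 2%N) (f 3%N)) (M (f 4%N) (f 5%N)))
                (oppR (mulR (M (f 2%N) (f 4%N)) (M (f 3%N) (f 5%N)))))
          (mulR (M (f 2%N) (f 5%N)) (M (f 3%N) (f 4%N))))).

Lemma PScube (M : nat -> nat -> R) (skew : forall a b, M a b = oppR (M b a)) :
  PS 6 (Gcube M) = twoR * twoR * twoR * twoR * twoR * threeR * threeR * Pf6M M.
Proof.
rewrite /Gcube. psexp.
rewrite (skew 1%N 0%N) (skew 2%N 0%N) (skew 3%N 0%N) (skew 4%N 0%N) (skew 5%N 0%N)
 (skew 2%N 1%N) (skew 3%N 1%N) (skew 4%N 1%N) (skew 5%N 1%N) (skew 3%N 2%N) (skew 4%N 2%N)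
 (skew 5%N 2%N) (skew 4%N 3%N) (skew 5%N 3%N) (skew 5%N 4%N).
rewrite /Pf6M /threeR /twoR.
rring.
Qed.

Lemma filter_nthv n k (L : seq 'rV[R]_n) (i j : 'I_k.+1) :
  [seq (nthv L : 'I_k.+1 -> _) l | l <- enum 'I_k.+1 & (l != i) && (l != j)] =
  [seq nth 0 L l | l <- iota 0 k.+1 & (l != val i) && (l != val j)].
Proof.
rewrite -val_enum_ord [in RHS]filter_map -map_comp.
by [].
Qed.

Lemma cons_nthv n k (A : 'rV[R]_n) (L : seq 'rV[R]_n) :
  (fun t : 'I_k => if val t == 0%N then A else nth 0 L (val t).-1) = nthv (A :: L).
Proof. by apply: functional_extensionality => -[[|t] Ht]. Qed.

Lemma eqbE (a b : nat) : Nat.eqb a b = (a == b).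
Proof. by apply/idP/eqP => [/Nat.eqb_eq|->] //; apply/Nat.eqb_eq. Qed.
Lemma ltbE (a b : nat) : Nat.ltb a b = (a < b)%N.
Proof. by apply/idP/idP => [/Nat.ltb_lt/ltP|/ltP/Nat.ltb_lt]. Qed.

Lemma ce_dN n k br (phi : kform R n k) (L : seq 'rV[R]_n) :
 ce_d br phi (nthv L) = sumL (iota 0%N k.+1) (fun i => sumL (iota 0%N k.+1) (fun j =>
   if Nat.ltb i j then mulR (sgn (Nat.add i j)) (phi (nthv (br (nth 0 L i) (nth 0 L j) ::
     [seq nth 0 L l | l <- iota 0%N k.+1 & negb (Nat.eqb l i) && negb (Nat.eqb l j)])))
   else zeroR)).
Proof.
rewrite sumLE /ce_d; apply: eq_bigr => i _; rewrite sumLE big_mkcond; apply: eq_bigr => j _.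
rewrite ltbE; case: ifP => // _.
rewrite filter_nthv cons_nthv sgnE plusE; congr (_ * phi (nthv (_ :: _))).
Qed.

Definition F3 n (phi : kform R n 3) (x y z : 'rV[R]_n) : R := phi (nthv [:: x; y; z]).
Lemma F3E n (phi : kform R n 3) (x y z : 'rV[R]_n) : phi (nthv [:: x; y; z]) = F3 phi x y z.
Proof. by []. Qed.

Ltac cdexp := rewrite ce_dN; cbn [sumL iota Nat.ltb Nat.leb Nat.add filter Nat.eqb negb andb nth map Nat.odd Nat.even];
  rewrite /sgn; cbn [Nat.odd Nat.even negb].

Lemma ce_d3E n br (phi : kform R n 3) (a b c d : 'rV[R]_n) :
  ce_d br phi (nthv [:: a; b; c; d]) =
  - F3 phi (br a b) c d + F3 phi (br a c) b d - F3 phi (br a d) b c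
  - F3 phi (br b c) a d + F3 phi (br b d) a c - F3 phi (br c d) a b.
Proof. cdexp; rewrite !F3E; rring. Qed.

Lemma ce_d2E n br (phi : kform R n 2) (a b c : 'rV[R]_n) :
  ce_d br phi (nthv [:: a; b; c]) =
  - W2 phi (br a b) c + W2 phi (br a c) b - W2 phi (br b c) a.
Proof. cdexp; rewrite !W2E; rring. Qed.

Definition F1 n (a : kform R n 1) (x : 'rV[R]_n) : R := a (nthv [:: x]).
Lemma F1E n (a : kform R n 1) (x : 'rV[R]_n) : a (nthv [:: x]) = F1 a x.
Proof. by []. Qed.

Lemma kw11 n (a b : kform R n 1) (p q : 'rV[R]_n) :
  kwedge a b (nthv [:: p; q]) = F1 a p * F1 b q - F1 a q * F1 b p.
Proof.
rewrite kwedgeL -natrM (_ : (1`! * 1`!)%N = 1%N) //; apply: cmul_inv => //.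
psexp; rewrite !F1E !mulrS mulr0n; rring.
Qed.

Definition D3 (c : nat -> nat -> R) (i j k : nat) : R :=
  c 0%N i * (c 1%N j * c 2%N k - c 2%N j * c 1%N k)
- c 1%N i * (c 0%N j * c 2%N k - c 2%N j * c 0%N k)
+ c 2%N i * (c 0%N j * c 1%N k - c 1%N j * c 0%N k).

Lemma kw12 n (a b c : kform R n 1) (x y z : 'rV[R]_n) :
  kwedge a (kwedge b c) (nthv [:: x; y; z]) =
  D3 (fun s i => F1 (nth a [:: a; b; c] i) (nth 0 [:: x; y; z] s)) 0%N 1%N 2%N.
Proof.
rewrite kwedgeL -natrM (_ : (1`! * 2`!)%N = 2%N) //; apply: cmul_inv => //.
rewrite (_ : (fun f : nat -> nat => _) = (fun f => F1 a (nth 0 [:: x; y; z] (f 0%N)) *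
   (F1 b (nth 0 [:: x; y; z] (f 1%N)) * F1 c (nth 0 [:: x; y; z] (f 2%N)) -
    F1 b (nth 0 [:: x; y; z] (f 2%N)) * F1 c (nth 0 [:: x; y; z] (f 1%N))))).
  psexp; rewrite /D3 /=; rewrite !mulrS mulr0n; rring.
apply: functional_extensionality => f.
by cbn [mkseq map iota addn addn_rec Nat.add]; rewrite kw11.
Qed.

Definition co (B : 'M[R]_7) (i : nat) (x : 'rV[R]_7) : R := (x *m B) 0 (inord i).

Lemma f3E B i j k (x y z : 'rV[R]_7) :
  f3 B i j k (nthv [:: x; y; z]) = D3 (fun s l => co B l (nth 0 [:: x; y; z] s)) i.-1 j.-1 k.-1.
Proof. by rewrite /f3 kw12. Qed.

Definition G2P (c : nat -> nat -> R) : R :=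
  D3 c 0%N 1%N 6%N + D3 c 2%N 3%N 6%N + D3 c 4%N 5%N 6%N + D3 c 0%N 2%N 4%N
  - D3 c 1%N 2%N 5%N - D3 c 0%N 3%N 5%N - D3 c 1%N 3%N 4%N.

Lemma G2E B (x y z : 'rV[R]_7) :
  G2_std B (nthv [:: x; y; z]) = G2P (fun s l => co B l (nth 0 [:: x; y; z] s)).
Proof. by rewrite /G2_std !f3E. Qed.

Lemma G2P_ext (c c' : nat -> nat -> R) :
  (forall s l, (s < 3)%N -> (l < 7)%N -> c s l = c' s l) -> G2P c = G2P c'.
Proof. by move=> H; rewrite /G2P /D3 !H. Qed.

Lemma G2Ev B (v : 'I_3 -> 'rV[R]_7) :
  G2_std B v = G2P (fun s l => co B l (v (inord s))).
Proof.
rewrite {1}(_ : v = nthv [:: v (inord 0); v (inord 1); v (inord 2)]).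
  2: by apply: functional_extensionality => -[[|[|[|//]]] Hi] /=; congr v; apply: val_inj; rewrite /= inordK.
rewrite G2E; apply: G2P_ext => -[|[|[|//]]] l _ _ //=.
Qed.

Lemma coL B l (a : R) (x y : 'rV[R]_7) : co B l (a *: x + y) = a * co B l x + co B l y.
Proof. by rewrite /co mulmxDl -scalemxAl !mxE. Qed.

Lemma eq_inord k a (i : 'I_k.+1) : (a <= k)%N -> (inord a == i) = (a == val i).
Proof. by move=> Ha; rewrite -(inj_eq val_inj) /= inordK. Qed.

Lemma G2_ml B : @kmultilinear R 7 3 (G2_std B).
Proof.
move=> v i a x y; rewrite !G2Ev /kupd.
case: i => -[|[|[|//]]] Hi; rewrite /G2P /D3 !eq_inord //= !coL; rring.
Qed.

Lemma G2P_rows (c : nat -> nat -> R) s t : (s < 3)%N -> (t < 3)%N -> s != t ->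
  (forall l, c s l = c t l) -> G2P c = 0.
Proof.
case: s => [|[|[|//]]] _; case: t => [|[|[|//]]] _ //= _ H; rewrite /G2P /D3 ?H; rring.
Qed.

Lemma G2_alt B : @kalternating R 7 3 (G2_std B).
Proof.
move=> v i j Hij Hv; rewrite G2Ev; apply: (@G2P_rows _ i j) => //.
by move=> l; rewrite !inord_val Hv.
Qed.

Lemma G2_form B : @is_kform R 7 3 (G2_std B).
Proof. split; [exact: G2_ml | exact: G2_alt]. Qed.

Definition D3R (c : nat -> nat -> R) (i j k : nat) : R :=
  addR (addR (mulR (c 0%N i) (addR (mulR (c 1%N j) (c 2%N k)) (oppR (mulR (c 2%N j) (c 1%N k)))))
  (oppR (mulR (c 1%N i) (addR (mulR (c 0%N j) (c 2%N k)) (oppR (mulR (c 2%N j) (c 0%N k)))))))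
  (mulR (c 2%N i) (addR (mulR (c 0%N j) (c 1%N k)) (oppR (mulR (c 1%N j) (c 0%N k))))).
Lemma D3_R c i j k : D3 c i j k = D3R c i j k.
Proof. by rewrite /D3 /D3R; rring. Qed.

Definition G2PR (c : nat -> nat -> R) : R :=
  addR (addR (addR (addR (addR (addR (D3R c 0%N 1%N 6%N) (D3R c 2%N 3%N 6%N)) (D3R c 4%N 5%N 6%N))
   (D3R c 0%N 2%N 4%N)) (oppR (D3R c 1%N 2%N 5%N))) (oppR (D3R c 0%N 3%N 5%N))) (oppR (D3R c 1%N 3%N 4%N)).
Lemma G2P_R c : G2P c = G2PR c.
Proof.
rewrite /G2P /G2PR !D3_R.
move: (D3R c 0 1 6) (D3R c 2 3 6) (D3R c 4 5 6) (D3R c 0 2 4) (D3R c 1 2 5) (D3R c 0 3 5) (D3R c 1 3 4).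
move=> *; rring.
Qed.

Definition Pf6R (M : nat -> nat -> R) : R :=
  let t a b c d e f := mulR (M a b) (addR (addR (mulR (M c d) (M e f)) (oppR (mulR (M c e) (M d f))))
                                          (mulR (M c f) (M d e))) in
  addR (addR (addR (addR (t 0 1 2 3 4 5)%N (oppR (t 0 2 1 3 4 5)%N)) (t 0 3 1 2 4 5)%N)
    (oppR (t 0 4 1 2 3 5)%N)) (t 0 5 1 2 3 4)%N.
Lemma Pf6_R M : Pf6M M = Pf6R M.
Proof. rewrite /Pf6M /Pf6R /=; rring. Qed.

Definition dl (a l : nat) : R := if Nat.eqb a l then oneR else zeroR.
Definition cK (Y : nat -> R) (a b : nat) (s l : nat) : R :=
  match s with 0 => Y l | 1 => dl a l | _ => dl b l end.
Definition SQ (Y : nat -> R) : R :=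
  addR (mulR (Y 0%N) (Y 0%N)) (addR (mulR (Y 1%N) (Y 1%N)) (addR (mulR (Y 2%N) (Y 2%N))
   (addR (mulR (Y 3%N) (Y 3%N)) (addR (mulR (Y 4%N) (Y 4%N)) (addR (mulR (Y 5%N) (Y 5%N))
   (mulR (Y 6%N) (Y 6%N))))))).

Ltac pfk := rewrite /Pf6R /G2PR /D3R; cbv beta zeta; cbn [cK bmp dl Nat.leb Nat.eqb]; rewrite /sgn /SQ; cbn [Nat.odd Nat.even negb];
    match goal with |- ?a = ?b => change (@eq R a b) end; ring.

Lemma PfK (Y : nat -> R) k : (k < 7)%N ->
  Pf6M (fun a b => G2P (cK Y (bmp k a) (bmp k b))) = mulR (sgn k) (mulR (SQ Y) (Y k)).
Proof.
move=> Hk; rewrite Pf6_R (_ : (fun a b => G2P (cK Y (bmp k a) (bmp k b))) =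
   (fun a b => G2PR (cK Y (bmp k a) (bmp k b)))); last first.
  by do 2 (apply: functional_extensionality => ?); rewrite G2P_R.
move: Hk; case: k => [|[|[|[|[|[|[|//]]]]]]] _.
all: pfk.
Qed.

Lemma kcontract_nthv n k (X : 'rV[R]_n) (phi : kform R n k.+1) (L : seq 'rV[R]_n) :
  kcontract X phi (nthv L) = phi (nthv (X :: L)).
Proof.
rewrite /kcontract; congr phi; apply: functional_extensionality => t.
by case: (unliftP ord0 t) => [t'|] ->.
Qed.

Lemma G2W2 B (X x y : 'rV[R]_7) :
  W2 (kcontract X (G2_std B)) x y = G2P (fun s l => co B l (nth 0 [:: X; x; y] s)).
Proof. by rewrite /W2 kcontract_nthv G2E. Qed.

Lemma G2skew B (X x y : 'rV[R]_7) :
  W2 (kcontract X (G2_std B)) x y = - W2 (kcontract X (G2_std B)) y x.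
Proof. rewrite !G2W2 /G2P /D3 /=; rring. Qed.

Lemma kcubeG n (w : kform R n 2) (L : seq 'rV[R]_n)
  (skew : forall x y, W2 w x y = - W2 w y x) :
  kcube w (nthv L) = (2`!%:R * (2 + 2)`!%:R)^-1 *
     PS 6 (Gcube (fun a b => W2 w (nth 0 L a) (nth 0 L b))).
Proof.
rewrite /kcube kwedgeL; congr (_ * PS _ _); apply: functional_extensionality => f.
cbn [mkseq map iota addn addn_rec Nat.add]; rewrite kw22 // /Gcube /twoR !W2E; rring.
Qed.

Lemma twoR_neq0 : twoR != 0.
Proof. by rewrite /twoR -oneE -addE -(natrD R 1 1) pnatr_eq0. Qed.
Lemma threeR_neq0 : threeR != 0.
Proof. by rewrite /threeR /twoR -oneE -!addE -(natrD R 1 1) -(natrD R 1 2) pnatr_eq0. Qed.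

Lemma kcube_nz n (w : kform R n 2) (L : seq 'rV[R]_n)
  (skew : forall x y, W2 w x y = - W2 w y x) :
  Pf6M (fun a b => W2 w (nth 0 L a) (nth 0 L b)) != 0 -> kcube w (nthv L) != 0.
Proof.
move=> HP; rewrite kcubeG // PScube; last by move=> a b; rewrite skew.
rewrite mulf_neq0 // ?invr_eq0 -?natrM ?pnatr_eq0 ?fact_gt0 //.
by rewrite !mulf_neq0 ?twoR_neq0 ?threeR_neq0.
Qed.

Lemma SQ_sum (Y : nat -> R) : SQ Y = \sum_(i < 7) Y i * Y i.
Proof. rewrite -(sumLE 7 (fun i => Y i * Y i)); cbn [sumL iota]; rewrite /SQ; rring. Qed.

Lemma SQ_nz (Y : nat -> R) k : (k < 7)%N -> Y k != 0 -> SQ Y != 0.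
Proof.
move=> Hk HY; rewrite SQ_sum; apply/negP => /eqP H.
have H1 : (fun i : 'I_7 => Y i * Y i) (Ordinal Hk) = 0.
  by apply: (psumr_eq0P _ H) => // i _; rewrite -expr2 sqr_ge0.
by move/eqP: H1; rewrite /= mulf_eq0 orbb (negbTE HY).
Qed.

Lemma Pf6M_ext (M M' : nat -> nat -> R) :
  (forall a b, (a < 6)%N -> (b < 6)%N -> M a b = M' a b) -> Pf6M M = Pf6M M'.
Proof. by move=> H; rewrite /Pf6M !H. Qed.

Definition ub (B : 'M[R]_7) (p : nat) : 'rV[R]_7 := delta_mx 0 (inord p) *m invmx B.

Lemma co_u B p l : B \in unitmx -> (p < 7)%N -> (l < 7)%N -> co B l (ub B p) = dl p l.
Proof.
move=> HB Hp Hl; rewrite /co /ub mulmxKV // mxE eqxx /= eq_inord // [val _]/= inordK // eq_sym /dl eqbE.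
by case: (p == l); rewrite ?mulr1n ?mulr0n.
Qed.

Lemma bmp_lt k a : (k < 7)%N -> (a < 6)%N -> (bmp k a < 7)%N.
Proof.
rewrite /bmp => Hk Ha; case: Nat.leb => //; exact: ltn_trans Ha _.
Qed.

Lemma G2_nondeg (B : 'M[R]_7) (X : 'rV[R]_7) : B \in unitmx -> X != 0 ->
  exists v, kcube (kcontract X (G2_std B)) v != 0.
Proof.
move=> HB HX.
have XB0 : X *m B != 0 by apply: contraNneq HX => H; rewrite -(mulmxK HB X) H mul0mx.
have [j Hj] : exists j : 'I_7, (X *m B) 0 j != 0.
  case: (pickP (fun j : 'I_7 => (X *m B) 0 j != 0)) => [j Hj | H0]; first by exists j.
  case/negP: XB0; apply/eqP/rowP => j; rewrite [RHS]mxE; apply/eqP.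
  by move: (H0 j) => /= /negbFE.
pose Y := fun l => co B l X.
have Hk : (j < 7)%N by [].
have HY : Y j != 0 by rewrite /Y /co inord_val.
exists (nthv (mkseq (fun a => ub B (bmp j a)) 6)).
apply: kcube_nz; first exact: G2skew.
rewrite (@Pf6M_ext _ (fun a b => G2P (cK Y (bmp j a) (bmp j b)))); last first.
  move=> a b Ha Hb; rewrite !nth_mkseq // G2W2; apply: G2P_ext => -[|[|[|//]]] l _ Hl //=;
  by rewrite co_u // bmp_lt.
rewrite PfK // -!mulE !mulf_neq0 // ?(SQ_nz Hk HY) //.
by rewrite sgnE signr_eq0.
Qed.

Lemma kupd_id n k (v : 'I_k -> 'rV[R]_n) i : kupd v i (v i) = v.
Proof. by apply: functional_extensionality => t; rewrite /kupd; case: eqP => // ->. Qed.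

Lemma form_zero n k (f : kform R n k) v i : kmultilinear f -> f (kupd v i 0) = 0.
Proof.
move=> Hf; have := Hf v i 1 0 0; rewrite scale1r addr0 mul1r => H.
by apply: (@addrI _ (f (kupd v i 0))); rewrite addr0 -H.
Qed.

Definition cfX n k (X : 'rV[R]_n) (v : 'I_k -> 'rV[R]_n) : 'I_k.+1 -> 'rV[R]_n :=
  fun t => if unlift ord0 t is Some t' then v t' else X.

Lemma cfX_upd n k X (v : 'I_k -> 'rV[R]_n) i y :
  cfX X (kupd v i y) = kupd (cfX X v) (lift ord0 i) y.
Proof.
apply: functional_extensionality => t; rewrite /cfX /kupd.
case: (unliftP ord0 t) => [t'|] ->; first by rewrite (inj_eq lift_inj).
by rewrite (negbTE (neq_lift _ _)).
Qed.

Lemma contract_form n k X (phi : kform R n k.+1) :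
  is_kform phi -> is_kform (kcontract X phi).
Proof.
case=> Hm Ha; split.
  by move=> v i a x y; rewrite /kcontract -!/(cfX X _) !cfX_upd Hm.
move=> v i j Hij Hv; rewrite /kcontract -/(cfX X v); apply: (Ha _ (lift ord0 i) (lift ord0 j)).
  by rewrite (inj_eq lift_inj).
by rewrite /cfX !liftK.
Qed.

Lemma contract_X n k X (phi : kform R n k.+1) v i :
  kalternating phi -> v i = X -> kcontract X phi v = 0.
Proof.
move=> Ha Hv; rewrite /kcontract -/(cfX X v); apply: (Ha _ ord0 (lift ord0 i)).
  exact: neq_lift.
by rewrite /cfX liftK unlift_none.
Qed.

Section Descend.
Variables (P : 'M[R]_(7, 6)) (Q : 'M[R]_(6, 7)) (X : 'rV[R]_7).
Hypothesis QP : Q *m P = 1%:M.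
Hypothesis kerX : forall z, z *m P = 0 -> exists a : R, z = a *: X.

Lemma step_PQ k (f : kform R 7 k) v i : kmultilinear f ->
  (forall v i, f (kupd v i X) = 0) -> f v = f (kupd v i (v i *m P *m Q)).
Proof.
move=> Hm HX.
have [a Ha] : exists a : R, v i - v i *m P *m Q = a *: X.
  by apply: kerX; rewrite mulmxBl -!mulmxA QP mulmx1 subrr.
have E : v i = a *: X + v i *m P *m Q by rewrite -Ha subrK.
by rewrite -{1}(kupd_id v i) {1}E Hm HX mulr0 add0r.
Qed.

Lemma omega_PQ (phi : kform R 7 3) (u : 'I_2 -> 'rV[R]_7) : is_kform phi ->
  kcontract X phi u = kcontract X phi (fun t => u t *m P *m Q).
Proof.
move=> Hphi; have [Hm Ha] := contract_form X Hphi.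
have HX : forall v i, kcontract X phi (kupd v i X) = 0.
  by move=> v i; apply: (@contract_X 7 2 X phi (kupd v i X) i Hphi.2); rewrite /kupd eqxx.
rewrite (step_PQ u ord0 Hm HX) (step_PQ _ (lift ord0 ord0) Hm HX).
congr (kcontract X phi); apply: functional_extensionality => -[[|[|//]] Ht].
  by rewrite /kupd /=; congr (u _ *m P *m Q); apply: val_inj.
by rewrite /kupd /=; congr (u _ *m P *m Q); apply: val_inj.
Qed.
End Descend.

Lemma kwedge_pull n m (T : 'M[R]_(n, m)) p q (a : kform R n p) (b : kform R n q)
  (a' : kform R m p) (b' : kform R m q) :
  (forall u, a' (fun t => u t *m T) = a u) -> (forall u, b' (fun t => u t *m T) = b u) ->
  forall v, kwedge a' b' (fun t => v t *m T) = kwedge a b v.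
Proof.
move=> Ha Hb v; rewrite /kwedge; congr (_ * _); apply: eq_bigr => s _.
by rewrite -Ha -Hb.
Qed.

Lemma kcube_pull n m (T : 'M[R]_(n, m)) (a : kform R n 2) (a' : kform R m 2) :
  (forall u, a' (fun t => u t *m T) = a u) ->
  forall v, kcube a' (fun t => v t *m T) = kcube a v.
Proof.
move=> Ha v; rewrite /kcube; apply: kwedge_pull => // u.
exact: kwedge_pull.
Qed.

Lemma kupd3_0 n (p q r z : 'rV[R]_n) : kupd (nthv [:: p; q; r] : 'I_3 -> _) ord0 z = nthv [:: z; q; r].
Proof. by apply: functional_extensionality => -[[|[|[|//]]] Ht]. Qed.
Lemma kupd3_1 n (p q r z : 'rV[R]_n) :
  kupd (nthv [:: p; q; r] : 'I_3 -> _) (lift ord0 (ord0 : 'I_2)) z = nthv [:: p; z; r].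
Proof. by apply: functional_extensionality => -[[|[|[|//]]] Ht]. Qed.

Lemma F3_swap n (phi : kform R n 3) a b c : is_kform phi -> F3 phi a b c = - F3 phi b a c.
Proof.
case=> Hm Ha.
have L0 x y q r : F3 phi (x + y) q r = F3 phi x q r + F3 phi y q r.
  by have := Hm (nthv [:: x; q; r]) ord0 1 x y; rewrite scale1r mul1r !kupd3_0.
have L1 p x y r : F3 phi p (x + y) r = F3 phi p x r + F3 phi p y r.
  by have := Hm (nthv [:: p; x; r]) (lift ord0 ord0) 1 x y; rewrite scale1r mul1r !kupd3_1.
have A0 x r : F3 phi x x r = 0 by apply: (Ha _ ord0 (lift ord0 ord0)).
have := A0 (a + b) c; rewrite L0 !L1 !A0 add0r addr0 => /eqP.
by rewrite addr_eq0 => /eqP.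
Qed.

Lemma F3_zero n (phi : kform R n 3) a b : kmultilinear phi -> F3 phi 0 a b = 0.
Proof. by move=> Hm; rewrite /F3 -(kupd3_0 0 a b 0) form_zero. Qed.

Section Descend2.
Variables (brg : 'rV[R]_7 -> 'rV[R]_7 -> 'rV[R]_7) (brh : 'rV[R]_6 -> 'rV[R]_6 -> 'rV[R]_6).
Variables (P : 'M[R]_(7, 6)) (Q : 'M[R]_(6, 7)) (X : 'rV[R]_7).
Hypothesis QP : Q *m P = 1%:M.
Hypothesis kerX : forall z, z *m P = 0 -> exists a : R, z = a *: X.
Hypothesis XP : X *m P = 0.
Hypothesis Hhom : forall x y, brg x y *m P = brh (x *m P) (y *m P).
Hypothesis Hcent : forall z, z *m P = 0 -> forall y, brg z y = 0.

Definition wh (phi : kform R 7 3) : kform R 6 2 :=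
  fun u => kcontract X phi (fun t => u t *m Q).

Lemma wh_form phi : is_kform phi -> is_kform (wh phi).
Proof.
move=> Hphi; have [Hm Ha] := contract_form X Hphi; split.
  move=> v i a x y; rewrite /wh.
  have E z : (fun t => kupd v i z t *m Q) = kupd (fun t => v t *m Q) i (z *m Q).
    by apply: functional_extensionality => t; rewrite /kupd; case: eqP.
  by rewrite !E mulmxDl -scalemxAl Hm.
move=> v i j Hij Hv; rewrite /wh; apply: (Ha _ i j Hij) => /=; by rewrite Hv.
Qed.

Lemma wh_pull phi : is_kform phi ->
  forall u, wh phi (fun t => u t *m P) = kcontract X phi u.
Proof. by move=> Hphi u; rewrite /wh [RHS](omega_PQ QP kerX _ Hphi). Qed.

Lemma W2_PQ phi (z y : 'rV[R]_7) : is_kform phi -> y *m P *m Q = y ->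
  W2 (kcontract X phi) (z *m P *m Q) y = W2 (kcontract X phi) z y.
Proof.
move=> Hphi Hy; rewrite /W2 [in RHS](omega_PQ QP kerX _ Hphi); congr (kcontract X phi).
by apply: functional_extensionality => -[[|[|//]] Ht] //=; rewrite Hy.
Qed.

Lemma wh_closed phi : is_kform phi -> ce_closed brg phi -> ce_closed brh (wh phi).
Proof.
move=> Hphi Hcl x.
rewrite (_ : x = nthv [:: x (inord 0); x (inord 1); x (inord 2)]); last first.
  by apply: functional_extensionality => -[[|[|[|//]]] Hi] /=; congr x; apply: val_inj; rewrite /= inordK.
rewrite ce_d2E.
set x0 := x (inord 0); set x1 := x (inord 1); set x2 := x (inord 2).
have whW p q : W2 (wh phi) p q = W2 (kcontract X phi) (p *m Q) (q *m Q).
  rewrite /W2 /wh; congr (kcontract X phi).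
  by apply: functional_extensionality => -[[|[|//]] Ht].
have yP (p : 'rV[R]_6) : p *m Q *m P = p by rewrite -mulmxA QP mulmx1.
have yPQ (p : 'rV[R]_6) : p *m Q *m P *m Q = p *m Q by rewrite yP.
have brQ (p q : 'rV[R]_6) : brh p q *m Q = brg (p *m Q) (q *m Q) *m P *m Q.
  by rewrite Hhom !yP.
rewrite !whW !brQ !W2_PQ //.
have := Hcl (nthv [:: X; x0 *m Q; x1 *m Q; x2 *m Q]); rewrite ce_d3E.
rewrite !(Hcent XP) !F3_zero; try by case: Hphi.
rewrite ![F3 phi (brg _ _) X _]F3_swap //.
rewrite /W2 !kcontract_nthv !F3E => H.
rewrite -[RHS]oppr0 -H; rring.
Qed.
End Descend2.

Lemma part1 (brg : 'rV[R]_7 -> 'rV[R]_7 -> 'rV[R]_7) (brh : 'rV[R]_6 -> 'rV[R]_6 -> 'rV[R]_6)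
  (P : 'M[R]_(7, 6)) (X : 'rV[R]_7) :
  row_full P ->
  (forall x y, brg x y *m P = brh (x *m P) (y *m P)) ->
  (forall z, z *m P = 0 -> forall y, brg z y = 0) ->
  ~ (exists w : kform R 6 2, lie_symplectic brh w) ->
  X *m P = 0 -> (forall z, z *m P = 0 -> exists a : R, z = a *: X) ->
  (forall phi : kform R 7 3, is_kform phi -> ce_closed brg phi ->
     forall v, kcube (kcontract X phi) v = 0).
Proof.
move=> HP Hhom Hcent Hns XP kerX phi Hphi Hcl v.
have [Q QP] := row_fullP HP.
case: (eqVneq (kcube (kcontract X phi) v) 0) => // Hnz.
exfalso; apply: Hns; exists (wh Q X phi); split.
- exact: wh_form.
- exact: (wh_closed QP kerX XP Hhom Hcent).
- exists (fun t => v t *m P).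
  rewrite (@kcube_pull _ _ P (kcontract X phi)); first exact/eqP.
  exact: (wh_pull QP kerX).
Qed.

Lemma X_nz (P : 'M[R]_(7, 6)) (X : 'rV[R]_7) :
  (forall z, z *m P = 0 -> exists a : R, z = a *: X) -> X != 0.
Proof.
move=> kerX; apply/eqP => X0.
have K0 : kermx P = 0.
  apply/row_matrixP => i; rewrite row0.
  have Hr : row i (kermx P) *m P = 0 by rewrite -row_mul mulmx_ker row0.
  by have [a ->] := kerX _ Hr; rewrite X0 scaler0.
have := mxrank_ker P; rewrite K0 mxrank0 => /esym/eqP; rewrite subn_eq0 => H1.
by have := leq_trans H1 (rank_leq_col P).
Qed.
End S.

Theorem mainTheorem6 (R : realFieldType)
  (brg : 'rV[R]_7 -> 'rV[R]_7 -> 'rV[R]_7)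
  (brh : 'rV[R]_6 -> 'rV[R]_6 -> 'rV[R]_6)
  (P : 'M[R]_(7, 6)) (X : 'rV[R]_7) :
  lie_bracket brg -> lie_bracket brh ->
  row_full P ->
  (forall x y, brg x y *m P = brh (x *m P) (y *m P)) ->
  (forall z, z *m P = 0 -> forall y, brg z y = 0) ->
  ~ (exists w : kform R 6 2, lie_symplectic brh w) ->
  X *m P = 0 -> (forall z, z *m P = 0 -> exists a : R, z = a *: X) ->
  (forall phi : kform R 7 3, is_kform phi -> ce_closed brg phi ->
     forall v, kcube (kcontract X phi) v = 0)
  /\ ~ (exists phi : kform R 7 3, lie_calibrated_G2 brg phi).
Proof.
move=> _ _ HP Hhom Hcent Hns XP kerX.
have P1 := part1 HP Hhom Hcent Hns XP kerX.
split => //.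
move=> [phi [[B [HB Hphi]] Hcl]].
have E : phi = G2_std B by apply: functional_extensionality.
subst phi.
have [v Hv] := G2_nondeg HB (X_nz kerX).
by move/eqP: Hv; apply; apply: P1 => //; apply: G2_form.
Qed.
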